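(* Let $G=(V,A)$ be a graph, $\mathfrak n=\mathfrak n(G)$, and $\delta$ a Lie bialgebra structure on $\mathfrak n$ with $\delta(\mathfrak z)=0$ and such that for every vertex $e_i$, $\delta(e_i)=\sum_{\alpha\in A}\lambda_{i,\alpha}\,e_i\wedge\alpha+\omega_i$ for some scalars $\lambda_{i,\alpha}$ and some $\omega_i\in\Lambda^2\mathfrak z$ (i.e. the maps $D_\alpha$ with $\delta(v)\equiv\sum_\alpha D_\alpha(v)\wedge\alpha \bmod \Lambda^2\mathfrak z$ are diagonal in the vertex basis with $D_\alpha(e_i)=\lambda_{i,\alpha}e_i$). If $\alpha_0\in A$ joins $e_{i_0}$ and $e_{j_0}$, then $\lambda_{i_0,\alpha}=-\lambda_{j_0,\alpha}$ for all $\alpha\in A$ with $\alpha\ne\alpha_0$.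
   Context: $G=(V,A)$ is a finite simple graph without loops and without isolated vertices, $V=\{e_1,\dots,e_n\}$ ordered, each edge joining $e_i,e_j$ ($i<j$) oriented from $e_i$ to $e_j$. $\mathfrak n(G)$ over a field of characteristic zero has basis $V\cup A$, $[e_i,e_j]=\alpha$ if $\alpha$ goes from $e_i$ to $e_j$, $[e_i,e_j]=0$ if not adjacent, edges central; $\mathfrak z=\mathrm{span}(A)$. Lie bialgebra structure: linear $\delta:\mathfrak n\to\Lambda^2\mathfrak n$ with co-Jacobi and the 1-cocycle condition $\delta[x,y]=[\delta x,y]+[x,\delta y]$. *)

(* Defs.v *)
From HB Require Import structures.
From mathcomp Require Import all_boot all_order all_algebra.
Set Implicit Arguments. Unset Strict Implicit. Unset Printing Implicit Defensive.
Import Order.TTheory GRing.Theory.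
Local Open Scope ring_scope.

(* Graph on vertices e_0,...,e_{n-1} (type 'I_n), adjacency relation adj.
   An edge is a pair (i,j) with i < j and adj i j; it is oriented from i to j. *)
Definition edge (n : nat) (adj : rel 'I_n) :=
  {p : 'I_n * 'I_n | (p.1 < p.2)%N && adj p.1 p.2}.

Definition esrc n (adj : rel 'I_n) (a : edge adj) : 'I_n := (val a).1.
Definition etgt n (adj : rel 'I_n) (a : edge adj) : 'I_n := (val a).2.

Definition bidx n (adj : rel 'I_n) := ('I_n + edge adj)%type.

Section NG.
Variables (F : fieldType) (n : nat) (adj : rel 'I_n).

(* vectors of n(G) (coordinates in the basis V ∪ A) *)
Local Notation vec := {ffun bidx adj -> F^o}.
(* tensors in n(G) ⊗ n(G); Λ²n(G) is the subspace of skew tensors *)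
Local Notation ten := {ffun bidx adj * bidx adj -> F^o}.

Definition bv (b : bidx adj) : vec := [ffun c => (c == b)%:R].

Definition edge_of (i j : 'I_n) : option (edge adj) := insub (i, j).

Definition brB (b c : bidx adj) : vec :=
  match b, c with
  | inl i, inl j =>
      match edge_of i j, edge_of j i with
      | Some a, _ => bv (inr a)
      | None, Some a => - bv (inr a)
      | None, None => 0
      end
  | _, _ => 0
  end.

Definition br (x y : vec) : vec :=
  \sum_(b : bidx adj) \sum_(c : bidx adj) (x b * y c) *: brB b c.

Definition tens (u v : vec) : ten := [ffun p => u p.1 * v p.2].
Definition wedge (u v : vec) : ten := tens u v - tens v u.

Definition skew (t : ten) : Prop := forall p q, t (p, q) = - t (q, p).

(* adjoint action of x on n ⊗ n : x.(u⊗v) = [x,u]⊗v + u⊗[x,v] *)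
Definition act (x : vec) (t : ten) : ten :=
  \sum_(p : bidx adj * bidx adj)
     t p *: (tens (br x (bv p.1)) (bv p.2) + tens (bv p.1) (br x (bv p.2))).

(* 1-cocycle condition δ[x,y] = [δx,y] + [x,δy] = x.δy - y.δx *)
Definition cocycle (delta : vec -> ten) : Prop :=
  forall x y : vec, delta (br x y) = act x (delta y) - act y (delta x).

(* co-Jacobi: the cyclic sum of (δ ⊗ id) δ (x) vanishes.
   With δ x = Σ c(p,q) b_p ⊗ b_q, (δ⊗id)δ x has coefficient
   T(r,s,q) = Σ_p c(p,q) δ(b_p)(r,s) on b_r ⊗ b_s ⊗ b_q. *)
Definition dd (delta : vec -> ten) (x : vec) (r s q : bidx adj) : F :=
  \sum_(p : bidx adj) delta x (p, q) * delta (bv p) (r, s).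

Definition coJacobi (delta : vec -> ten) : Prop :=
  forall (x : vec) (r s q : bidx adj),
    dd delta x r s q + dd delta x s q r + dd delta x q r s = 0.

Definition lie_bialgebra (delta : {linear vec -> ten}) : Prop :=
  [/\ forall x, skew (delta x), cocycle delta & coJacobi delta].

Definition is_edge_idx (b : bidx adj) : bool := if b is inr _ then true else false.

Definition in_L2z (t : ten) : Prop :=
  skew t /\ forall b c, ~~ (is_edge_idx b && is_edge_idx c) -> t (b, c) = 0.
End NG.

Notation vec F adj := {ffun bidx adj -> F^o}.
Notation ten F adj := {ffun bidx adj * bidx adj -> F^o}.

(* Main.v *)
Require Import Defs.
From HB Require Import structures.
From mathcomp Require Import all_boot all_order all_algebra.
Import GRing.Theory.
Local Open Scope ring_scope.

Section H.
Variables (F : fieldType) (n : nat) (adj : rel 'I_n).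

Lemma bvE (b c : bidx adj) : bv F b c = (c == b)%:R.
Proof. by rewrite ffunE. Qed.

Lemma br_bv (b c : bidx adj) : br (bv F b) (bv F c) = brB F b c.
Proof.
rewrite /br (bigD1 b) //= [X in _ + X]big1 => [|b' nb]; last first.
  by rewrite big1 // => c' _; rewrite bvE (negbTE nb) mul0r scale0r.
rewrite addr0 (bigD1 c) //= [X in _ + X]big1 => [|c' nc]; last by rewrite !bvE (negbTE nc) mulr0 scale0r.
by rewrite !bvE !eqxx mul1r scale1r addr0.
Qed.

Lemma brB_inr (b : bidx adj) (a : edge adj) : brB F b (inr a) = 0.
Proof. by case: b. Qed.

Lemma brBE (i m : 'I_n) (e : edge adj) :
  brB F (inl i) (inl m) (inr e) = (val e == (i, m))%:R - (val e == (m, i))%:R.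
Proof.
have ve := valP e; move: ve => /andP [lt ad].
rewrite /brB /edge_of.
case: insubP => [a /andP[lt1 _] va|nim].
  rewrite bvE.
  have -> : (val e == (m, i)) = false.
    apply/negP => /eqP E; rewrite E /= in lt.
    by move: (ltn_trans lt lt1); rewrite ltnn.
  rewrite subr0; congr (_ %:R).
  by rewrite -va.
case: insubP => [a _ va|nmi].
  rewrite !ffunE /=.
  have -> : (val e == (i, m)) = false.
    apply/negP => /eqP E; rewrite E /= in lt ad; by rewrite lt ad in nim.
  rewrite sub0r; congr (- _ %:R).
  by rewrite -va.
have -> : (val e == (i, m)) = false.
  apply/negP => /eqP E; rewrite E /= in lt ad; by rewrite lt ad in nim.
have -> : (val e == (m, i)) = false.
  apply/negP => /eqP E; rewrite E /= in lt ad; by rewrite lt ad in nmi.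
by rewrite ffunE subr0.
Qed.

Lemma actE (b : bidx adj) (t : ten F adj) (r s : bidx adj) :
  act (bv F b) t (r, s) =
  \sum_c t (c, s) * brB F b c r + \sum_c t (r, c) * brB F b c s.
Proof.
rewrite /act sum_ffunE.
under eq_bigr do rewrite /tens !ffunE /= !br_bv -[_ *: _]/(_ * _) mulrDr.
rewrite big_split /=.
congr (_ + _).
  rewrite [LHS](_ : _ = \sum_c \sum_d t (c, d) * (brB F b c r * (s == d)%:R)); last first.
    by rewrite pair_bigA; apply: eq_bigr => -[c d].
  apply: eq_bigr => c _.
  rewrite (bigD1 s) //= [X in _ + X]big1 => [|c' nc]; last by rewrite eq_sym (negbTE nc) mulr0 mulr0.
  by rewrite eqxx mulr1 addr0.
rewrite [LHS](_ : _ = \sum_c \sum_d t (c, d) * ((r == c)%:R * brB F b d s)); last first.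
  by rewrite pair_bigA; apply: eq_bigr => -[c d].
rewrite (bigD1 r) //= [X in _ + X]big1 => [|c' nc]; last first.
  by rewrite big1 // => d _; rewrite eq_sym (negbTE nc) mul0r mulr0.
rewrite addr0; apply: eq_bigr => c _; by rewrite eqxx mul1r.
Qed.

Lemma oppfE (f : ten F adj) p : (- f) p = - f p.
Proof. by rewrite ffunE. Qed.
Lemma addfE (f g : ten F adj) p : (f + g) p = f p + g p.
Proof. by rewrite ffunE. Qed.
Lemma scalefE (c : F) (f : ten F adj) p : (c *: f) p = c * f p.
Proof. by rewrite ffunE. Qed.
Lemma tensE (u v : vec F adj) p : tens u v p = u p.1 * v p.2.
Proof. by rewrite ffunE. Qed.


Lemma wvg (c : F) (u w x y : bidx adj) :
  (c *: wedge (bv F u) (bv F w)) (x, y) = c * ((x == u)%:R * (y == w)%:R - (x == w)%:R * (y == u)%:R).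
Proof. by rewrite scalefE /wedge addfE oppfE !tensE !bvE. Qed.
Lemma eq_ll (m k : 'I_n) : (inl m == inl k :> bidx adj) = (m == k). Proof. by []. Qed.
Lemma eq_rr (m k : edge adj) : (inr m == inr k :> bidx adj) = (m == k). Proof. by []. Qed.
Lemma eq_lr (m : 'I_n) (k : edge adj) : (inl m == inr k :> bidx adj) = false. Proof. by []. Qed.
Lemma eq_rl (m : 'I_n) (k : edge adj) : (inr k == inl m :> bidx adj) = false. Proof. by []. Qed.

Lemma dvert (k : 'I_n) (lam : 'I_n -> edge adj -> F) (d : ten F adj) (omega : ten F adj)
  (Hom : in_L2z omega)
  (Hd : d = \sum_(a : edge adj) lam k a *: wedge (bv F (inl k)) (bv F (inr a)) + omega)
  (m : 'I_n) (a : edge adj) :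
  d (inl m, inr a) = (m == k)%:R * lam k a /\ d (inr a, inl m) = - ((m == k)%:R * lam k a).
Proof.
have [_ Hz] := Hom.
rewrite Hd !addfE !sum_ffunE (Hz (inl m) (inr a)) // (Hz (inr a) (inl m)) //.
rewrite !addr0; split.
  under eq_bigr do rewrite wvg eq_ll eq_rr eq_lr mul0r subr0.
  rewrite (bigD1 a) //= [X in _ + X]big1 => [|c nc]; last first.
    by rewrite (_ : (a == c) = false) ?mulr0 // eq_sym (negbTE nc).
  by rewrite eqxx mulr1 addr0 mulrC.
under eq_bigr do rewrite wvg eq_ll eq_rr eq_rl mul0r sub0r.
rewrite (bigD1 a) //= [X in _ + X]big1 => [|c nc]; last first.
  by rewrite (_ : (a == c) = false) ?mul0r ?oppr0 ?mulr0 // eq_sym (negbTE nc).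
by rewrite eqxx mul1r addr0 mulrN mulrC.
Qed.

Lemma zerovE (x : bidx adj) : (0 : vec F adj) x = 0.
Proof. by rewrite ffunE. Qed.

Lemma actV (k b : 'I_n) (lam : 'I_n -> edge adj -> F) (d : ten F adj)
  (Hd : forall m a, d (inl m, inr a) = (m == k)%:R * lam k a /\ d (inr a, inl m) = - ((m == k)%:R * lam k a))
  (r s : edge adj) :
  act (bv F (inl b)) d (inr r, inr s) =
   lam k s * brB F (inl b) (inl k) (inr r) - lam k r * brB F (inl b) (inl k) (inr s).
Proof.
rewrite actE !big_sumType.
rewrite [X in _ + X + _]big1 => [|c _]; last by rewrite brB_inr zerovE mulr0.
rewrite [X in _ + (_ + X)]big1 => [|c _]; last by rewrite brB_inr zerovE mulr0.
rewrite !addr0.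
rewrite (bigD1 k) // [X in _ + X + _]big1 => [|c nc]; last by rewrite (Hd c s).1 (negbTE nc) !mul0r.
rewrite addr0 (bigD1 k) // [X in _ + (_ + X)]big1 => [|c nc]; last by rewrite (Hd c r).2 (negbTE nc) mul0r oppr0 mul0r.
by rewrite (Hd k s).1 (Hd k r).2 eqxx !mul1r !addr0 mulNr.
Qed.

Lemma subfE (f g : ten F adj) p : (f - g) p = f p - g p.
Proof. by rewrite !ffunE. Qed.
Lemma zerotE p : (0 : ten F adj) p = 0.
Proof. by rewrite ffunE. Qed.
End H.

Theorem mainTheorem15 (F : fieldType) (n : nat) (adj : rel 'I_n)
  (charF0 : [pchar F] =i pred0)
  (adj_sym : symmetric adj) (adj_irr : irreflexive adj)
  (no_isolated : forall i : 'I_n, exists j : 'I_n, adj i j)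
  (delta : {linear vec F adj -> ten F adj})
  (Hbialg : lie_bialgebra delta)
  (Hz : forall a : edge adj, delta (bv F (inr a)) = 0)
  (lam : 'I_n -> edge adj -> F)
  (Hform : forall i : 'I_n, exists omega : ten F adj,
      in_L2z omega /\
      delta (bv F (inl i)) =
        \sum_(a : edge adj) lam i a *: wedge (bv F (inl i)) (bv F (inr a)) + omega)
  (a0 : edge adj) :
  forall a : edge adj, a != a0 -> lam (esrc a0) a = - lam (etgt a0) a.
Proof.
move=> a ana0.
have [_ Hcoc _] := Hbialg.
have va0 : val a0 = (esrc a0, etgt a0) by rewrite /esrc /etgt -surjective_pairing.
have /andP [Hij _] := valP a0.
rewrite -/(esrc a0) -/(etgt a0) in Hij.
move: (esrc a0) (etgt a0) va0 Hij => i j va0 Hij.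
have brij : brB F (inl i) (inl j) = bv F (inr a0).
  by rewrite /brB /edge_of -va0 valK.
have E' : delta (br (bv F (inl i)) (bv F (inl j))) = 0.
  rewrite br_bv brij; exact: Hz.
have E : 0 = act (bv F (inl i)) (delta (bv F (inl j))) - act (bv F (inl j)) (delta (bv F (inl i))).
  rewrite -{1}E'; exact: Hcoc.
move: E => /(congr1 (fun t : ten F adj => t (inr a0, inr a))).
rewrite zerotE subfE.
have [omi [Hoi Hdi]] := Hform i.
have [omj [Hoj Hdj]] := Hform j.
rewrite (actV _ _ _ _ i _ _ (dvert _ _ _ _ _ _ _ Hoj Hdj) a0 a) (actV _ _ _ _ j _ _ (dvert _ _ _ _ _ _ _ Hoi Hdi) a0 a) (brBE _ _ _ i j a0) (brBE _ _ _ i j a) (brBE _ _ _ j i a0) (brBE _ _ _ j i a).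
have e1 : (val a0 == (i, j)) by rewrite va0.
have e2 : (val a0 == (j, i)) = false.
  apply/negP => /eqP; rewrite va0 => -[ij _]; by rewrite ij ltnn in Hij.
have e3 : (val a == (i, j)) = false.
  apply/negP => /eqP; rewrite -va0 => /val_inj aa0; by rewrite aa0 eqxx in ana0.
have e4 : (val a == (j, i)) = false.
  have /andP [Ha _] := valP a.
  apply/negP => /eqP E; rewrite E /= in Ha.
  by move: (ltn_trans Ha Hij); rewrite ltnn.
rewrite e1 e2 e3 e4 !subrr !subr0 !sub0r !mulr0 !subr0 mulr1 mulrN1 opprK => /eqP.
rewrite eq_sym addr_eq0 => /eqP ->.
by rewrite opprK.
Qed.
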